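(* For each integer $d \ge 4$, one has $\mathrm{rc}_\ell(\Delta_d) \ge \log_2 \log_2 d$, where $\Delta_d = \{0,e_1,\dots,e_d\} \subseteq \mathbb{Z}^d$.
   Context: For $X, Y \subseteq \mathbb{Z}^d$, $\mathrm{rc}(X,Y)$ is the smallest number of inequalities in a linear system $Ax \le b$ satisfied by all points of $X$ and such that each point of $Y\setminus X$ violates at least one inequality. With $B_t = [-t,t]^d\cap\mathbb{Z}^d$, $\mathrm{rc}_\ell(X) = \max_{t\in\mathbb{Z}_{>0}} \mathrm{rc}(X,B_t)$. $e_i$ denotes the $i$-th standard unit vector. *)

(* Defs.v *)
From HB Require Import structures.
From mathcomp Require Import all_boot all_order all_algebra.
From mathcomp Require Import all_classical all_reals.
From mathcomp Require Import ereal exp.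
Set Implicit Arguments. Unset Strict Implicit. Unset Printing Implicit Defensive.
Import Order.TTheory GRing.Theory Num.Theory.
Local Open Scope classical_set_scope.
Local Open Scope ring_scope.

Definition pt (d : nat) := 'rV[int]_d.

Definition is_relaxation (R : realType) (d m : nat) (X Y : set (pt d)) : Prop :=
  exists (A : 'M[R]_(m, d)) (b : 'cV[R]_m),
    (forall x, X x -> forall i : 'I_m,
        \sum_(j < d) A i j * (x ord0 j)%:~R <= b i ord0) /\
    (forall y, Y y -> ~ X y -> exists i : 'I_m,
        b i ord0 < \sum_(j < d) A i j * (y ord0 j)%:~R).

(* rc(X,Y): the smallest number of inequalities (+oo if none exists). *)
Definition rc (R : realType) (d : nat) (X Y : set (pt d)) : \bar R :=
  ereal_inf [set ((m%:R : R)%:E) | m in [set m : nat | is_relaxation R m X Y]].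

Definition box (d t : nat) : set (pt d) :=
  [set x | forall j : 'I_d, `|x ord0 j| <= (t%:Z)].

(* rc_ell(X) = max_{t in Z_{>0}} rc(X, B_t)  (taken as a supremum in \bar R) *)
Definition rc_ell (R : realType) (d : nat) (X : set (pt d)) : \bar R :=
  ereal_sup [set @rc R d X (@box d t) | t in [set t : nat | (0 < t)%N]].

Definition Delta (d : nat) : set (pt d) :=
  [set x | x = 0 \/ exists i : 'I_d, x = delta_mx ord0 i].

Definition log2 (R : realType) (x : R) : R := ln x / ln 2.

(* Main.v *)
Require Import Defs.
From HB Require Import structures.
From mathcomp Require Import all_boot all_order all_algebra.
From mathcomp Require Import all_classical all_reals.
From mathcomp Require Import ereal exp.
From mathcomp Require Import lra.
Import Order.TTheory GRing.Theory Num.Theory.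
Set Implicit Arguments. Unset Strict Implicit. Unset Printing Implicit Defensive.
Local Open Scope ring_scope.
Definition mono_up (R : realDomainType) (d : nat) (f : 'I_d -> R) (S : {set 'I_d}) :=
  forall x y, x \in S -> y \in S -> (x < y)%N -> f x <= f y.
Definition mono_dn (R : realDomainType) (d : nat) (f : 'I_d -> R) (S : {set 'I_d}) :=
  forall x y, x \in S -> y \in S -> (x < y)%N -> f y <= f x.

Definition chainb (R : realDomainType) (d : nat) (f : 'I_d -> R) (C : {set 'I_d}) :=
  [forall x in C, forall y in C, (x < y)%N ==> (f x <= f y)].

Definition lab (R : realDomainType) (d : nat) (f : 'I_d -> R) (S : {set 'I_d}) (i : 'I_d) :=
  (\max_(C : {set 'I_d} | [&& C \subset S, chainb f C, i \in C & [forall x in C, (i <= x)%N]]) #|C|)%N.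

Lemma lab_ge (R : realDomainType) (d : nat) (f : 'I_d -> R) (S : {set 'I_d}) i :
  i \in S -> (1 <= lab f S i)%N.
Proof.
move=> iS; rewrite /lab.
have -> : 1%N = #|[set i]| by rewrite cards1.
apply: (@leq_bigmax_cond _ _ (fun C : {set 'I_d} => #|C|)) => /=.
rewrite finset.sub1set iS set11 /=; apply/andP; split.
  by apply/forallP => x; apply/implyP; rewrite inE => /eqP->; apply/forallP => y;
     apply/implyP; rewrite inE => /eqP->; rewrite ltnn.
by apply/forallP => x; apply/implyP; rewrite inE => /eqP->.
Qed.

Lemma lab_step (R : realDomainType) (d : nat) (f : 'I_d -> R) (S : {set 'I_d}) i j :
  i \in S -> j \in S -> (i < j)%N -> f i <= f j -> (lab f S j < lab f S i)%N.
Proof.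
move=> iS jS ij fij.
have H : (lab f S j <= (lab f S i).-1)%N.
  apply/bigmax_leqP => C /and4P [CS ch jC jmin].
  have iC : i \notin C.
    apply/negP => iC; move/forallP: jmin => /(_ i); rewrite iC /= => ji.
    by move: (leq_trans ij ji); rewrite ltnn.
  have : (#|i |: C| <= lab f S i)%N.
    apply: (@leq_bigmax_cond _ _ (fun C : {set 'I_d} => #|C|)) => /=.
    rewrite finset.subUset finset.sub1set iS CS setU11 /=.
    apply/andP; split.
      apply/forallP => x; apply/implyP => /setU1P [->|xC];
      apply/forallP => y; apply/implyP => /setU1P [->|yC]; apply/implyP => xy.
      - by rewrite lexx.
      - apply: le_trans fij _.
        have [<-|jy] := eqVneq j y; first by rewrite lexx.
        move/forallP: ch => /(_ j); rewrite jC /= => /forallP /(_ y); rewrite yC /= => /implyP; apply.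
        rewrite ltn_neqAle; apply/andP; split; first by [].
        by move/forallP: jmin => /(_ y); rewrite yC.
      - move/forallP: jmin => /(_ x); rewrite xC /= => jx.
        by move: (leq_ltn_trans jx xy); rewrite ltnNge (ltnW ij).
      - by move/forallP: ch => /(_ x); rewrite xC /= => /forallP /(_ y); rewrite yC /= => /implyP; apply.
    apply/forallP => x; apply/implyP => /setU1P [->|xC]; first by [].
    by move/forallP: jmin => /(_ x); rewrite xC /= => jx; apply: leq_trans jx; apply: ltnW.
  by rewrite cardsU1 iC add1n => H; rewrite -ltnS (leq_trans H) // -ltnS prednK // (leq_trans _ H).
by rewrite (leq_ltn_trans H) // prednK // (lab_ge f iS).
Qed.

Lemma ES (R : realDomainType) (d : nat) (f : 'I_d -> R) (S : {set 'I_d}) n :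
  (n * n < #|S|)%N ->
  exists S' : {set 'I_d}, [/\ S' \subset S, (n < #|S'|)%N & (mono_up f S' \/ mono_dn f S')].
Proof.
move=> HS.
case: (boolP [exists C : {set 'I_d}, [&& C \subset S, chainb f C & (n < #|C|)%N]]).
  move/existsP => [C /and3P [CS ch nC]]; exists C; split => //; left => x y xC yC xy.
  by move/forallP: ch => /(_ x); rewrite xC /= => /forallP /(_ y); rewrite yC /= => /implyP; apply.
move=> noC.
have labn : forall i, (lab f S i <= n)%N.
  move=> i; apply/bigmax_leqP => C /and4P [CS ch _ _]; rewrite leqNgt; apply/negP => nC.
  by move/negP: noC; apply; apply/existsP; exists C; rewrite CS ch nC.
have [v Hv] : exists v : 'I_n.+1, (n < #|[set i in S | lab f S i == v]|)%N.
  case: (boolP [exists v : 'I_n.+1, (n < #|[set i in S | lab f S i == v]|)%N]) => [/existsP//|/existsPn H].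
  exfalso.
  have : (#|S| <= n * n)%N.
    rewrite -sum1_card (partition_big (fun i => inord (lab f S i) : 'I_n.+1) predT) //=.
    rewrite big_ord_recl /= big1 ?add0n; last first.
      move=> i /andP [iS /eqP h]; have := lab_ge f iS; move: h => /(congr1 val).
      by rewrite /= inordK ?ltnS // => ->.
    rewrite -[X in (_ <= X * _)%N]card_ord -sum_nat_const; apply: leq_sum => v _.
    have := H (lift ord0 v); rewrite -leqNgt; apply: leq_trans.
    rewrite -sum1_card; apply: eq_leq; apply: eq_bigl => i; rewrite inE.
    case iS: (i \in S) => //=.
    apply/eqP/eqP => [h|h].
      by move/(congr1 val): h; rewrite /= inordK // ltnS.
    by apply: val_inj; rewrite /= inordK ?ltnS // h.
  by rewrite leqNgt HS.
exists [set i in S | lab f S i == v]; split => //.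
  by apply/fintype.subsetP => i; rewrite inE => /andP [].
right => x y; rewrite !inE => /andP [xS /eqP xv] /andP [yS /eqP yv] xy.
have [//|fxy] := leP (f y) (f x).
have := lab_step xS yS xy (ltW fxy); rewrite xv yv ltnn //.
Qed.

Lemma main_ind (R : realDomainType) (d : nat) (F : nat -> 'I_d -> R) m (S : {set 'I_d}) :
  (2 ^ (2 ^ m) < #|S|)%N -> exists S' : {set 'I_d},
    [/\ S' \subset S, (2 < #|S'|)%N &
        forall k, (k < m)%N -> mono_up (F k) S' \/ mono_dn (F k) S'].
Proof.
elim: m S => [|m IH] S HS; first by exists S.
have HS' : (2 ^ (2 ^ m) * 2 ^ (2 ^ m) < #|S|)%N by rewrite mulnn -expnM -expnSr.
have [S1 [S1S nS1 mon1]] := ES (F m) HS'.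
have [S' [S'S1 nS' monk]] := IH S1 nS1.
exists S'; split => //; first exact: fintype.subset_trans S'S1 S1S.
move=> k; rewrite ltnS leq_eqVlt => /orP [/eqP ->|km]; last exact: monk.
case: mon1 => [h|h]; [left|right] => x y xS yS; apply: h; exact: (fintype.subsetP S'S1).
Qed.

Lemma triple (R : realDomainType) (d : nat) (F : nat -> 'I_d -> R) m :
  (2 ^ (2 ^ m) < d)%N -> exists i l j : 'I_d,
    [/\ (i < l)%N, (l < j)%N & forall k, (k < m)%N -> (F k i <= F k l) || (F k j <= F k l)].
Proof.
move=> Hd.
have HT : (2 ^ (2 ^ m) < #|[set: 'I_d]|)%N by rewrite cardsT card_ord.
have [S' [_ nS' mon]] := main_ind F HT.
have [a aS] : exists a, a \in S'.
  by apply/card_gt0P; apply: leq_trans nS'.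
case: (arg_minnP (fun x : 'I_d => val x) aS) => i iS imin.
case: (arg_maxnP (fun x : 'I_d => val x) aS) => j jS jmax.
have : (0 < #|S' :\: [set i; j]|)%N.
  rewrite cardsD; have : (#|S' :&: [set i; j]| <= 2)%N.
    by apply: leq_trans (subset_leq_card (subsetIr _ _)) _; rewrite cards2; case: (_ != _).
  by move: nS'; clear; move=> h1 h2; rewrite subn_gt0; apply: leq_ltn_trans h2 h1.
move/card_gt0P => [l]; rewrite !inE negb_or => /andP [/andP [li lj] lS].
have il : (i < l)%N by rewrite ltn_neqAle (imin l lS) andbT eq_sym.
have lj' : (l < j)%N by rewrite ltn_neqAle lj; exact: (jmax l lS).
exists i, l, j; split => // k km.
by case: (mon k km) => h; [rewrite (h i l) | rewrite (h l j) ?orbT].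
Qed.

Lemma no_relax (R : realType) (d m : nat) :
  (2 ^ (2 ^ m) < d)%N -> ~ is_relaxation R m (@Delta d) (@box d 1).
Proof.
move=> Hd [A [b [HX HY]]].
pose F := fun k (j : 'I_d) => if (insub k : option 'I_m) is Some k' then A k' j else 0.
have [i [l [j [il lj Hk]]]] := triple F Hd.
pose lin (x : pt d) (k : 'I_m) := \sum_(j0 < d) A k j0 * (x ord0 j0)%:~R.
have linD x z k : lin (x + z) k = lin x k + lin z k.
  by rewrite /lin -big_split; apply: eq_bigr => j0 _; rewrite mxE intrD mulrDr.
have linB x z k : lin (x - z) k = lin x k - lin z k.
  by rewrite /lin -sumrB; apply: eq_bigr => j0 _; rewrite !mxE intrB mulrBr.
have lind p k : lin (delta_mx ord0 p) k = A k p.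
  rewrite /lin (bigD1 p) //= mxE !eqtype.eqxx /= mulr1 big1 ?addr0 // => j0 /negbTE j0p.
  by rewrite mxE j0p andbF mulr0.
have ij : (i == j) = false by exact: ltn_eqF (ltn_trans il lj).
have il' : (i == l) = false by exact: ltn_eqF il.
have lj' : (l == j) = false by exact: ltn_eqF lj.
pose y : pt d := delta_mx ord0 i + delta_mx ord0 j - delta_mx ord0 l.
have yl : y ord0 l = -1.
  by rewrite /y !mxE /= eq_sym il' lj' eqtype.eqxx add0r.
have Yy : @box d 1 y.
  move=> j0; rewrite /y !mxE /=.
  case: (eqVneq j0 i) => [->|j0i]; first by rewrite ij il'.
  case: (eqVneq j0 j) => [->|j0j]; first by rewrite eq_sym lj'.
  by case: (j0 == l).
have nXy : ~ @Delta d y.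
  case=> [y0|[p yp]].
    by move: yl; rewrite y0 mxE.
  by move: yl; rewrite yp mxE /=; case: (l == p).
have [k Hk'] := HY y Yy nXy.
have Ai p : A k p <= b k ord0.
  by rewrite -lind; apply: HX; right; exists p.
move: Hk'; rewrite -/(lin y k) linB linD !lind => hb.
have := Hk (val k) (ltn_ord k); rewrite /F valK => /orP [] h.
  have := Ai j; lra.
have := Ai i; lra.
Qed.

Lemma real_part (R : realType) (d m : nat) : (4 <= d)%N ->
  (m%:R : R) < log2 (log2 (d%:R : R)) -> (2 ^ (2 ^ m) < d)%N.
Proof.
move=> d4 hlt.
have l2 : (0 : R) < ln 2 by apply: ln_gt0; lra.
have d1 : (1 : R) < d%:R by rewrite (_ : 1 = 1%:R) // ltr_nat; apply: leq_trans d4.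
have ld : (0 : R) < ln d%:R by apply: ln_gt0.
have L0 : (0 : R) < ln d%:R / ln 2 by apply: divr_gt0.
move: hlt; rewrite /log2 ltr_pdivlMr // mulr_natl -lnXn //.
rewrite ltr_ln ?posrE ?exprn_gt0 //.
have e : (2 : R) ^+ m = (2 ^ m)%:R by rewrite natrX.
rewrite ltr_pdivlMr // e mulr_natl -lnXn //.
rewrite ltr_ln ?posrE ?exprn_gt0 //; last by lra.
by rewrite -natrX ltr_nat.
Qed.

Theorem theorem3p6 (R : realType) (d : nat) :
  (4 <= d)%N -> ((log2 (log2 (d%:R : R)))%:E <= @rc_ell R d (@Delta d))%E.
Proof.
move=> d4.
have H1 : ((log2 (log2 (d%:R : R)))%:E <= rc R (@Delta d) (@box d 1))%E.
  apply: le_ereal_inf_tmp => x [m Hm <-]; rewrite lee_fin leNgt; apply/negP => hlt.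
  exact: (no_relax (real_part d4 hlt) Hm).
apply: le_trans H1 _; apply: ereal_sup_ubound; exists 1%N => //.
Qed.
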